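(* Let $G$ be a layered graph over $\Sigma_{in}$ of depth $n$, $\epsilon>0$, and let $\mathsf{C}$ be an $\epsilon$-sensitive $(G,\Sigma_{out})$-code. For any $w\in\Sigma_{out}^n$, it holds that $|L_i(\mathsf{C},w,\epsilon)|\le1$ for at least $(1-\epsilon)n$ values of $i\le n$.
   Context: A layered graph over alphabet $\Sigma$ of depth $n$ is a directed graph whose vertices are partitioned into layers $0,\dots,n$, with exactly one vertex (the root) in layer $0$, and each vertex in layer $i<n$ has exactly $|\Sigma|$ out-edges to layer $i+1$ labeled by the distinct elements of $\Sigma$ (endpoints need not be distinct). A string $p\in\Sigma_{in}^i$ determines a unique root path ending at vertex $v(p)$ in layer $i$. A $(G,\Sigma_{out})$-code $\mathsf{C}$ assigns an element of $\Sigma_{out}$ to each edge; $\mathsf{C}(p)$ is the label string along $p$. Suffix distance: $\Delta_{sfx}(a,b)=\max_{0\le i\le m-1}\frac{\Delta(a[i+1:m],b[i+1:m])}{m-i}$, $\Delta$ Hamming distance. $L_i(\mathsf{C},w,\epsilon)=\{v(p):p\in\Sigma_{in}^i,\ \Delta_{sfx}(\mathsf{C}(p),w[1:i])<1-\epsilon\}$, $L(\mathsf{C},w,\epsilon)=\bigcup_{i=1}^nL_i(\mathsf{C},w,\epsilon)$. For $S\subseteq L(\mathsf{C},w,\epsilon)$, a prefix tree of $S$ is a union of paths $p(v)$ ($v\in S$) from the root to $v$, each with $\Delta_{sfx}(\mathsf{C}(p(v)),w[1:|p(v)|])<1-\epsilon$, that forms a rooted tree; $\mathcal{PT}(\mathsf{C},w,\epsilon)$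 is the set of all such prefix trees of subsets of $L(\mathsf{C},w,\epsilon)$. $agr(\mathsf{C}(H),w(H))$ is the number of edges of $H$ whose $\mathsf{C}$-label equals $w[i]$, $i$ the edge's depth. $\mathsf{C}$ is $\epsilon$-sensitive if for all $w\in\Sigma_{out}^n$ and all $PT\in\mathcal{PT}(\mathsf{C},w,\epsilon)$, $agr(\mathsf{C}(PT),w(PT))\le(1+\epsilon)n$. *)

(* Defs.v *)
From mathcomp Require Import all_boot all_order all_algebra.
Set Implicit Arguments. Unset Strict Implicit. Unset Printing Implicit Defensive.
Import Order.TTheory GRing.Theory Num.Theory.
Local Open Scope ring_scope.

(* Edges are identified
   with pairs (v, a) : V * Sin (only meaningful when layer v < n). *)
Definition layered_graph (Sin V : finType) (n : nat)
  (layer : V -> nat) (root : V) (next : V -> Sin -> V) : Prop :=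
  [/\ forall v, (layer v <= n)%N,
      layer root = 0%N,
      (forall v, layer v = 0%N -> v = root) &
      (forall v a, (layer v < n)%N -> layer (next v a) = (layer v).+1)].

Section Codes.
Variables (Sin Sout V : finType) (n : nat) (layer : V -> nat) (root : V)
  (next : V -> Sin -> V) (C : V -> Sin -> Sout).

Definition vtx (p : seq Sin) : V := foldl next root p.

Fixpoint edges_from (u : V) (p : seq Sin) : seq (V * Sin) :=
  if p is a :: p' then (u, a) :: edges_from (next u a) p' else [::].

Definition codeword (p : seq Sin) : seq Sout :=
  [seq C e.1 e.2 | e <- edges_from root p].

Variable (R : realFieldType).

Definition hamming (a b : seq Sout) : nat :=
  count (fun xy : Sout * Sout => xy.1 != xy.2) (zip a b).

Definition dsfx (a b : seq Sout) : R :=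
  let m := size a in
  \big[Num.max/0]_(i < m)
     ((hamming (drop i a) (drop i b))%:R / (m - i)%:R).

Variable (eps : R) (w : n.-tuple Sout).

Definition Lset (i : nat) : {set V} :=
  [set v | [exists p : i.-tuple Sin,
              (vtx p == v) && (dsfx (codeword p) (take i w) < 1 - eps)]].

Definition Lall : {set V} :=
  [set v | [exists i : 'I_n.+1, (0 < i)%N && (v \in Lset i)]].

Definition union_edges (S : {set V}) (p : V -> seq Sin) : {set V * Sin} :=
  \bigcup_(v in S) [set e in edges_from root (p v)].

Definition is_prefix_tree (S : {set V}) (p : V -> seq Sin) : Prop :=
  [/\ S \subset Lall,
      (forall v, v \in S ->
         [/\ (size (p v) <= n)%N, vtx (p v) = v &
             dsfx (codeword (p v)) (take (size (p v)) w) < 1 - eps]) &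
      (* the union forms a tree rooted at root: every vertex has at most one
         incoming edge in the union (connectivity/acyclicity are automatic) *)
      (forall e1 e2, e1 \in union_edges S p -> e2 \in union_edges S p ->
         next e1.1 e1.2 = next e2.1 e2.2 -> e1 = e2)].

(* agr(C(H), w(H)): edge at depth i = layer of source + 1 agrees with w[i] *)
Definition agr (H : {set V * Sin}) : nat :=
  #|[set e in H | Some (C e.1 e.2) == onth w (layer e.1)]|.

End Codes.

Definition eps_sensitive (Sin Sout V : finType) (n : nat) (layer : V -> nat)
  (root : V) (next : V -> Sin -> V) (C : V -> Sin -> Sout)
  (R : realFieldType) (eps : R) : Prop :=
  forall (w : n.-tuple Sout) (S : {set V}) (p : V -> seq Sin),
    is_prefix_tree root next C eps w S p ->
    (agr layer C w (union_edges root next S p))%:R <= (1 + eps) * n%:R.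

(* Main.v *)
From mathcomp Require Import all_boot all_order all_algebra.
From mathcomp Require Import lra.
Require Import Defs.
Set Implicit Arguments. Unset Strict Implicit. Unset Printing Implicit Defensive.
Import Order.TTheory GRing.Theory Num.Theory.
Local Open Scope ring_scope.

Section Pot.
Variables (R : realFieldType) (dl : R).

Definition Qc (ds : seq bool) (c : R) : Prop :=
  forall i, (i < size ds)%N ->
    (count id (drop i ds))%:R - dl * (size ds - i)%:R < c.

Lemma Q_cat p s c : Qc (p ++ s) c <->
  Qc s c /\ Qc p (c + dl * (size s)%:R - (count id s)%:R).
Proof.
split.
- move=> H; split.
  + move=> i Hi; have := H (size p + i)%N; rewrite size_cat ltn_add2l => /(_ Hi).
    rewrite drop_cat ltnNge leq_addr /= addnC addnK.
by rewrite [(i + _)%N]addnC subnDl.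
  + move=> i Hi; have := H i; rewrite size_cat (ltn_addr _ Hi) => /(_ isT).
    rewrite drop_cat Hi count_cat natrD addnC -addnBA ?(ltnW Hi) // natrD.
    move=> h; lra.
- move=> [Hs Hp] i; rewrite size_cat => Hi.
  case: (ltnP i (size p)) => Hip.
  + have := Hp i Hip.
    rewrite drop_cat Hip count_cat natrD addnC -addnBA ?(ltnW Hip) // natrD.
    move=> h; lra.
  + rewrite drop_cat ltnNge Hip /=.
    have Hi' : (i - size p < size s)%N by rewrite ltn_subLR.
    have := Hs _ Hi'.
    by rewrite subnBA // [(size s + _)%N]addnC.
Qed.

Definition mz (ds : seq bool) : R :=
  foldl (fun acc (b : bool) => Num.min 0 (acc + dl - b%:R)) 0 ds.

Lemma mz_rcons ds b : mz (rcons ds b) = Num.min 0 (mz ds + dl - b%:R).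
Proof. by rewrite /mz foldl_rcons. Qed.

Lemma mz_le0 ds : mz ds <= 0.
Proof. elim/last_ind: ds => [|ds b _]; first by rewrite /mz.
by rewrite mz_rcons ge_min lexx.
Qed.

Lemma Q1 b c : Qc [:: b] c <-> b%:R - dl < c.
Proof.
split; first by move=> /(_ 0%N isT) /=; rewrite addn0 subn0 mulr1.
by move=> h [|i] //= _; rewrite addn0 subn0 mulr1.
Qed.

Lemma Q_mz ds c : 0 < c -> (Qc ds c <-> 0 < mz ds + c).
Proof.
elim/last_ind: ds c => [|ds b IH] c c0.
  by rewrite /mz add0r; split => // _ i.
rewrite -cats1 Q_cat Q1 /= addn0 mulr1 cats1 mz_rcons.
have hm := mz_le0 ds.
case: (ltrP (b%:R - dl) c) => hb.
- rewrite IH; last by lra.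
  split.
  + move=> [_ h]; case: (leP 0 (mz ds + dl - b%:R)) => h2; lra.
  + case: (leP 0 (mz ds + dl - b%:R)) => h2 h; split => //; lra.
- split; first by case.
  case: (leP 0 (mz ds + dl - b%:R)) => h2 h; lra.
Qed.

Lemma Q_rcons0 ds b : Qc (rcons ds b) 0 <-> 0 < mz ds + dl - b%:R.
Proof.
rewrite -cats1 Q_cat Q1 /= addn0 mulr1 add0r.
have hm := mz_le0 ds.
case: (ltrP (b%:R - dl) 0) => hb.
- rewrite Q_mz; last by lra.
  by rewrite addrA; split => [[]|] //.
- split; first by case.
  move=> h; lra.
Qed.

Lemma Qc_last ds b : dl <= 1 -> Qc (rcons ds b) 0 -> b = false.
Proof.
move=> hd; rewrite -cats1 Q_cat Q1 => -[h _]; case: b h => //= h; lra.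
Qed.

Lemma count_mono (B B' : seq bool) : size B = size B' ->
  (forall j, nth false B j -> nth false B' j) -> (count id B <= count id B')%N.
Proof.
elim: B B' => [|b B IH] [|b' B'] //= [hs] h.
apply: leq_add; first by move: (h 0%N) => /= {}h; case: b h; case: b' => // ->.
by apply: IH => // j; apply: (h j.+1).
Qed.

Lemma Qc_mono B B' c c' : size B = size B' ->
  (forall j, nth false B j -> nth false B' j) -> c' <= c -> Qc B' c' -> Qc B c.
Proof.
move=> hs hn hc h i; rewrite hs => /h; rewrite -hs.
have : ((count id (drop i B)) <= count id (drop i B'))%N.
  apply: count_mono; first by rewrite !size_drop hs.
  by move=> j; rewrite !nth_drop; apply: hn.
rewrite -(ler_nat R) => hle h2; lra.
Qed.

End Pot.
Section Graph.
Variables (Sin Sout V : finType) (n : nat) (layer : V -> nat) (root : V)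
  (next : V -> Sin -> V) (C : V -> Sin -> Sout).
Hypothesis Hlg : layered_graph n layer root next.
Local Open Scope nat_scope.

Notation vtx := (vtx root next).

Lemma vtx_rcons p a : vtx (rcons p a) = next (vtx p) a.
Proof. by rewrite /Defs.vtx foldl_rcons. Qed.

Lemma layer_vtx p : size p <= n -> layer (vtx p) = size p.
Proof.
case: Hlg => _ H0 _ HS.
elim/last_ind: p => [|p a IH] //=; rewrite size_rcons => Hs.
have Hp : size p <= n by exact: ltnW.
by rewrite vtx_rcons HS IH // IH.
Qed.

Lemma edgesE u p a0 : edges_from next u p =
  [seq (foldl next u (take j p), nth a0 p j) | j <- iota 0 (size p)].
Proof.
elim: p u => [|a p IH] u //=.
rewrite IH -[1]addn0 iotaDl -map_comp; congr (_ :: _).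

Qed.

Lemma edges_rcons u p a : edges_from next u (rcons p a) =
  rcons (edges_from next u p) (foldl next u p, a).
Proof. by elim: p u => [|b p IH] u //=; rewrite IH. Qed.

Lemma edges_cat u p q : edges_from next u (p ++ q) =
  edges_from next u p ++ edges_from next (foldl next u p) q.
Proof. by elim: p u => [|b p IH] u //=; rewrite IH. Qed.

Lemma size_edges u p : size (edges_from next u p) = size p.
Proof. by elim: p u => [|b p IH] u //=; rewrite IH. Qed.

Lemma mem_edges p e a0 : size p <= n -> e \in edges_from next root p ->
  exists2 j, j < size p & [/\ e = (vtx (take j p), nth a0 p j),
     layer e.1 = j & layer (next e.1 e.2) = j.+1].
Proof.
move=> Hn; rewrite (edgesE _ _ a0) => /mapP [j]; rewrite mem_iota add0n => /andP[_ Hj] ->.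
exists j => //; have Hl : layer (vtx (take j p)) = j.
  by rewrite layer_vtx size_take Hj // (leq_trans (ltnW Hj)).
split => //=.
case: Hlg => _ _ _ HS; rewrite HS; first by rewrite Hl.
by rewrite Hl (leq_trans Hj Hn).
Qed.

End Graph.

Section Bridge.
Variables (Sin Sout V : finType) (n : nat) (layer : V -> nat) (root : V)
  (next : V -> Sin -> V) (C : V -> Sin -> Sout).
Hypothesis Hlg : layered_graph n layer root next.
Variable (R : realFieldType).

Definition agree (w : seq Sout) (e : V * Sin) : bool :=
  Some (C e.1 e.2) == onth w (layer e.1).

Definition dbits w p := [seq ~~ agree w e | e <- edges_from next root p].

Lemma drop_zip (S T : Type) (s : seq S) (t : seq T) i :
  drop i (zip s t) = zip (drop i s) (drop i t).
Proof. elim: s t i => [|x s IH] [|y t] [|i] //=; try by case: (drop _ _). Qed.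

Lemma onth_lt (T : Type) (x0 : T) (s : seq T) j : (j < size s)%N ->
  onth s j = Some (nth x0 s j).
Proof. by move=> h; rewrite onthE (nth_map x0). Qed.

Lemma zip_dbits (w : seq Sout) p : size w = n -> (size p <= n)%N ->
  [seq xy.1 != xy.2 | xy <- zip (codeword root next C p) (take (size p) w)]
  = dbits w p.
Proof.
move=> hw hp.
case: p hp => [|a0 p'] hp; first by rewrite /codeword /dbits /= take0.
set p := a0 :: p' in hp *.
have hsz : size (codeword root next C p) = size p by rewrite /codeword size_map size_edges.
have hst' : size (take (size p) w) = size p.
  by rewrite size_takel // hw.
apply: (@eq_from_nth _ false).
  by rewrite size_map size_zip hsz hst' minnn /dbits size_map size_edges.
move=> j; rewrite size_map size_zip hsz hst' minnn => hj.
have he : nth (root, a0) (edges_from next root p) j = (vtx root next (take j p), nth a0 p j).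
  by rewrite (edgesE _ _ _ a0) (nth_map 0%N) ?size_iota // nth_iota.
rewrite (nth_map (C root a0, C root a0)); last by rewrite size_zip hsz hst' minnn.
rewrite /dbits (nth_map (root, a0)); last by rewrite size_edges.
rewrite nth_zip ?hsz ?hst' // /codeword (nth_map (root, a0)) ?size_edges // he /=.
rewrite nth_take // /agree /= (layer_vtx Hlg); last by rewrite size_take hj (leq_trans (ltnW hj)).
rewrite size_take hj (onth_lt (C root a0)) //; last by rewrite hw (leq_trans hj hp).
Qed.

Lemma ham_drop (w : seq Sout) p i : size w = n -> (size p <= n)%N ->
  hamming (drop i (codeword root next C p)) (drop i (take (size p) w)) =
  count id (drop i (dbits w p)).
Proof.
move=> hw hp; rewrite -zip_dbits // /hamming -drop_zip -map_drop count_map.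
by [].
Qed.

Lemma good_iff (eps : R) (w : seq Sout) p : size w = n -> (size p <= n)%N ->
  eps < 1 ->
  (dsfx R (codeword root next C p) (take (size p) w) < 1 - eps <->
   Qc (1 - eps) (dbits w p) 0).
Proof.
move=> hw hp he.
have hsz : size (codeword root next C p) = size p by rewrite /codeword size_map size_edges.
have hdb : size (dbits w p) = size p by rewrite /dbits size_map size_edges.
rewrite /dsfx; split.
- move=> /bigmax_ltP [_ h] i; rewrite hdb => hi.
  have hi' : (i < size (codeword root next C p))%N by rewrite hsz.
  have := h (Ordinal hi') isT.
  rewrite /= ham_drop // hsz ltr_pdivrMr; last by rewrite ltr0n subn_gt0.
  move=> h2; rewrite subr_lt0; exact: h2.
- move=> h; apply/bigmax_ltP; split; first by rewrite subr_gt0.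
  move=> [i hi] _ /=; rewrite ham_drop // hsz ltr_pdivrMr; last by rewrite ltr0n subn_gt0 -hsz.
  rewrite -subr_lt0 -hdb; apply: h; by rewrite hdb -hsz.
Qed.

End Bridge.

Lemma exists_max (R : realFieldType) (I : finType) (P : pred I) (F : I -> R) i0 :
  P i0 -> exists i, P i && [forall j, P j ==> (F j <= F i)].
Proof.
move=> h; case: (arg_maxP F h) => i Pi Hm; exists i; rewrite Pi /=.
by apply/forallP => j; apply/implyP => /Hm.
Qed.

Section Canon.
Variables (Sin Sout V : finType) (n : nat) (layer : V -> nat) (root : V)
  (next : V -> Sin -> V) (C : V -> Sin -> Sout).
Hypothesis Hlg : layered_graph n layer root next.
Variables (R : realFieldType) (dl : R) (w : seq Sout).

Notation vtx := (vtx root next).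
Notation dbits := (dbits layer root next C w).
Notation agree := (agree layer C w).

Definition cand k (ck : V -> seq Sin) x (e : V * Sin) :=
  [&& next e.1 e.2 == x, layer e.1 == k, vtx (ck e.1) == e.1 & size (ck e.1) == k].
Definition val (ck : V -> seq Sin) (e : V * Sin) : R :=
  mz dl (dbits (ck e.1)) + dl - (~~ agree e)%:R.
Definition bestp k ck x e :=
  cand k ck x e && [forall e', cand k ck x e' ==> (val ck e' <= val ck e)].

Fixpoint canon (k : nat) (x : V) {struct k} : seq Sin :=
  if k is k'.+1 then
    if [pick e | bestp k' (canon k') x e] is Some e then rcons (canon k' e.1) e.2
    else [::]
  else [::].

Lemma canonS k x : canon k.+1 x =
  if [pick e | bestp k (canon k) x e] is Some e then rcons (canon k e.1) e.2 else [::].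
Proof. by []. Qed.

Lemma dbits_rcons p a : dbits (rcons p a) = rcons (dbits p) (~~ agree (vtx p, a)).
Proof. by rewrite /Defs.vtx /dbits edges_rcons map_rcons. Qed.

Lemma canon_tree k x e : e \in edges_from next root (canon k x) ->
  [pick e' | bestp (layer e.1) (canon (layer e.1)) (next e.1 e.2) e'] = Some e.
Proof.
elim: k x => [|k IH] x //=.
case hp: [pick e | bestp k (canon k) x e] => [e0|] //.
have he0 : bestp k (canon k) x e0 by move: hp; case: pickP => // e1 h [<-].
have hc := he0; case/andP: hc => /and4P [/eqP hx /eqP hl /eqP hv _] _.
rewrite edges_rcons mem_rcons inE => /orP [/eqP ->|/IH //].
change (foldl next root (canon k e0.1)) with (vtx (canon k e0.1)).
by rewrite hv /= hl; case: e0 hp he0 hx hl hv => /= y b hp _ -> _ _.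
Qed.

Lemma canon_spec k q : (k <= n)%N -> size q = k ->
  [/\ size (canon k (vtx q)) = k, vtx (canon k (vtx q)) = vtx q,
      mz dl (dbits q) <= mz dl (dbits (canon k (vtx q))) &
      (Qc dl (dbits q) 0 -> Qc dl (dbits (canon k (vtx q))) 0)].
Proof.
elim: k q => [|k IH] q hk hq.
  by case: q hq => //= _; rewrite /Defs.vtx /=.
case/lastP: q hq => [|q a] //; rewrite size_rcons => -[hq].
have [IH1 IH2 IH3 _] := IH q (ltnW hk) hq.
set y := vtx q.
have hcy : cand k (canon k) (vtx (rcons q a)) (y, a).
  rewrite /cand /= IH1 IH2 vtx_rcons !eqxx /= andbT.
  by rewrite /y (layer_vtx Hlg) hq ?eqxx // ltnW.
have [e he] := exists_max (val (canon k)) hcy.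
rewrite canonS; case: pickP => [e0 he0|/(_ e)]; last by rewrite /bestp he.
case/andP: he0 => /and4P [/eqP hx /eqP hl /eqP hv /eqP hs] /forallP hmax.
have hle := implyP (hmax (y, a)) hcy.
rewrite /val /= in hle.
rewrite size_rcons hs vtx_rcons hv hx; split => //.
  rewrite !dbits_rcons !mz_rcons hv -surjective_pairing.
  rewrite le_min; apply/andP; split; rewrite ge_min ?lexx //; apply/orP; right.
  rewrite /y in hle; lra.
rewrite !dbits_rcons !Q_rcons0 hv -surjective_pairing.
rewrite /y in hle; move=> h; lra.
Qed.

End Canon.

Section Aux.
Variables (Sin Sout V : finType) (n : nat) (layer : V -> nat) (root : V)
  (next : V -> Sin -> V) (C : V -> Sin -> Sout).

Lemma nth_dbits w p a0 j : (j < size p)%N ->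
  nth false (dbits layer root next C w p) j =
  ~~ agree layer C w (vtx root next (take j p), nth a0 p j).
Proof.
move=> hj; rewrite /dbits (nth_map (root, a0)) ?size_edges //.
by rewrite (edgesE _ _ _ a0) (nth_map 0%N) ?size_iota // nth_iota.
Qed.

Lemma dbits_mono w w' p :
  (forall e, e \in edges_from next root p -> agree layer C w e -> agree layer C w' e) ->
  forall j, nth false (dbits layer root next C w' p) j ->
            nth false (dbits layer root next C w p) j.
Proof.
move=> h j; case: p h => [|a0 p'] h; first by rewrite /dbits /= nth_nil.
case: (ltnP j (size (a0 :: p'))) => hj; last by rewrite nth_default // /dbits size_map size_edges.
rewrite !(nth_dbits _ a0) //; apply: contra; apply: h.
rewrite (edgesE _ _ _ a0); apply/mapP; exists j => //.
by rewrite mem_iota.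
Qed.

End Aux.

Theorem lemma5p12 (Sin Sout V : finType) (n : nat) (layer : V -> nat)
  (root : V) (next : V -> Sin -> V) (C : V -> Sin -> Sout)
  (R : realFieldType) (eps : R) :
  layered_graph n layer root next ->
  0 < eps ->
  eps_sensitive n layer root next C eps ->
  forall w : n.-tuple Sout,
    (1 - eps) * n%:R <=
    (#|[set i : 'I_n.+1 | (0 < i)%N &&
          (#|Lset root next C eps w i| <= 1)%N]|)%:R.
Proof.
move=> Hlg Heps Hsens w.
set K := #|_|.
have hn0 : 0 <= n%:R :> R by [].
have hK0 : 0 <= K%:R :> R by [].
case: (lerP 1 eps) => he1.
  have : (1 - eps) * n%:R <= 0 by rewrite mulr_le0_ge0 // subr_le0.
  move=> h; exact: le_trans h hK0.
set dl := 1 - eps.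
have hdl0 : 0 < dl by rewrite subr_gt0.
have hdl1 : dl <= 1 by rewrite /dl; lra.
have hw : size w = n by rewrite size_tuple.
set L := fun j => Lset root next C eps w j.
set Gs := [set i : 'I_n.+1 | (0 < i)%N && (1 < #|L i|)%N].
set Ks := [set i : 'I_n.+1 | (0 < i)%N && (#|L i| <= 1)%N].
have sum_ind : forall A : {set 'I_n.+1}, (\sum_(j < n.+1) (j \in A) = #|A|)%N.
  by move=> A; rewrite -sum1_card [RHS]big_mkcond; apply: eq_bigr => j _; case: (j \in A).
have sum_pos : (\sum_(j < n.+1) (0 < j)%N = n)%N.
  rewrite big_ord_recl /= add0n.
  by rewrite sum1_card card_ord.
have hKG : (K + #|Gs| = n)%N.
  have -> : K = #|Ks| by [].
  rewrite -!sum_ind -big_split -[RHS]sum_pos; apply: eq_bigr => j _.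
  rewrite !inE; case: (0 < j)%N => //=; by case: leqP.
rewrite leNgt; apply/negP => hlt.
have hGs : eps * n%:R < #|Gs|%:R.
  have : (#|Gs|%:R : R) = n%:R - K%:R.
    by rewrite -[in n%:R]hKG natrD; lra.
  move=> ->; move: hlt; rewrite mulrBl mul1r; lra.
have heps0 : 0 <= eps * n%:R by rewrite mulr_ge0 // ltW.
have : (0 < #|Gs|)%N by rewrite -(ltr_nat R); lra.
case/card_gt0P => i0; rewrite inE => /andP [hi0 hL].
have : (0 < #|L i0|)%N by exact: ltnW.
case/card_gt0P => v0; rewrite /L inE => /existsP [q0 /andP [/eqP hv0 hg0]].
have [a0 _] : exists a0 : Sin, True.
  by move: (size_tuple q0) hi0; case: (tval q0) => [<-|a _] //; exists a.
set GV := Lall root next C eps w.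
set f := fun v => canon layer root next C dl w (layer v) v.
have gv_spec : forall v, v \in GV -> [/\ (0 < layer v <= n)%N, size (f v) = layer v,
    vtx root next (f v) = v & Qc dl (dbits layer root next C w (f v)) 0].
  move=> v; rewrite inE => /existsP [i /andP [hi]]; rewrite inE.
  move=> /existsP [q /andP [/eqP hv hg]].
  have hq : size q = i by rewrite size_tuple.
  have hin : (i <= n)%N by rewrite -ltnS ltn_ord.
  have hl : layer v = i by rewrite -hv (layer_vtx Hlg) hq.
  have hg' : dsfx R (codeword root next C q) (take (size q) w) < 1 - eps by rewrite hq.
  rewrite (good_iff C Hlg hw) ?hq // in hg'.
  have [h1 h2 _ h4] := canon_spec C Hlg dl w hin hq.
  rewrite hv in h1 h2 h4.
  rewrite /f hl; split => //; first by rewrite hi.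
  exact: h4.
have hv0GV : v0 \in GV.
  rewrite inE; apply/existsP; exists i0; rewrite hi0 /= inE; apply/existsP; exists q0.
  by rewrite hv0 eqxx.
set vd := [arg max_(v > v0 in GV) layer v].
have [hvd hmax] : vd \in GV /\ forall v, v \in GV -> (layer v <= layer vd)%N.
  by rewrite /vd; case: arg_maxnP => // u hu hm; split => // v /hm.
set d := layer vd.
have [/andP [hd0 hdn] hsvd hvvd hgvd] := gv_spec _ hvd.
set spine := f vd ++ nseq (n - d) a0.
have hssp : size spine = n by rewrite size_cat hsvd size_nseq subnKC.
set xn := vtx root next spine.
have hlxn : layer xn = n by rewrite (layer_vtx Hlg) hssp.
set S := xn |: GV.
set p := fun v => if v == xn then spine else f v.
set U := union_edges root next S p.
set sp := fun j => (vtx root next (take j spine), nth a0 spine j).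
have hsp_mem : forall j, (j < n)%N -> sp j \in edges_from next root spine.
  by move=> j hj; rewrite (edgesE _ _ _ a0); apply/mapP; exists j; rewrite ?mem_iota ?hssp.
have hsp_layer : forall j, (j < n)%N -> layer (sp j).1 = j.
  move=> j hj; rewrite /= (layer_vtx Hlg) size_take hssp hj //.
  exact: ltnW.
have hspU : forall j, (j < n)%N -> sp j \in U.
  move=> j hj; apply/bigcupP; exists xn; first by rewrite setU11.
  by rewrite inE /p eqxx hsp_mem.
have hpath : forall v, v \in S ->
    [/\ size (p v) = layer v, (0 < layer v <= n)%N & vtx root next (p v) = v].
  move=> v; rewrite /p; case: (v =P xn) => [->|hne].
    by rewrite hssp hlxn leqnn (leq_trans hd0 hdn).
  move=> /setU1P [//|hv]; have [h1 h2 h3 _] := gv_spec v hv; by split.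
set pk := fun e : V * Sin => [pick e' | bestp layer root next C dl w (layer e.1)
   (canon layer root next C dl w (layer e.1)) (next e.1 e.2) e'].
have typeAB : forall e, e \in U ->
   ((layer e.1 < d)%N /\ layer (next e.1 e.2) = (layer e.1).+1 /\ pk e = Some e) \/
   ((d <= layer e.1 < n)%N /\ e = sp (layer e.1) /\ layer (next e.1 e.2) = (layer e.1).+1).
  move=> e /bigcupP [v hvS]; rewrite inE => he.
  have [hs1 /andP [_ hs2] _] := hpath v hvS.
  have [j hj [hej hlj hnj]] := mem_edges Hlg a0 (leq_trans (eq_leq hs1) hs2) he.
  move: he hej; rewrite /p; case: (v =P xn) => [_|hne] he hej.
    case: (ltnP j d) => hjd.
      left; rewrite hlj; split => //; split => //.
      apply: (canon_tree (k:=d) (x:=vd)).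
      have -> : e = (vtx root next (take j (f vd)), nth a0 (f vd) j).
        by rewrite hej /spine take_cat nth_cat hsvd hjd.
      by rewrite (edgesE _ _ _ a0); apply/mapP; exists j; rewrite ?mem_iota ?hsvd.
    right; rewrite hlj hjd; split; first by rewrite (leq_trans hj (leq_trans (eq_leq hs1) hs2)).
    by split.
  left; rewrite hlj; split; last first.
    split => //; exact: (canon_tree (k:=layer v) (x:=v)).
  move: hvS => /setU1P [/hne []|hv].
  apply: leq_trans hj _; rewrite hs1; exact: hmax.
have hinj : forall e1 e2, e1 \in U -> e2 \in U ->
    next e1.1 e1.2 = next e2.1 e2.2 -> e1 = e2.
  move=> e1 e2 h1 h2 hn.
  have hl : (layer e1.1).+1 = (layer e2.1).+1.
    by case: (typeAB _ h1) => [[_ [<- _]]|[_ [_ <-]]];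
       case: (typeAB _ h2) => [[_ [<- _]]|[_ [_ <-]]]; rewrite hn.
  move: hl => [hl].
  case: (typeAB _ h1) => [[l1 [_ p1]] | [/andP[l1 _] [s1 _]]];
  case: (typeAB _ h2) => [[l2 [_ p2]] | [/andP [l2 _] [s2 _]]].
  - have : pk e1 = pk e2 by rewrite /pk hl hn.
    by rewrite p1 p2 => -[].
  - move: l1 l2; rewrite hl => a b.
    by rewrite (ltn_geF a) in b.
  - move: l1 l2; rewrite hl => a b.
    by rewrite (ltn_geF b) in a.
  - by rewrite s1 s2 hl.
set F := fun j => if (j < d)%N && [exists e in U, (layer e.1 == j) && agree layer C w e]
  then nth (C root a0) w j else C (sp j).1 (sp j).2.
set ws := mkseq F n.
have hws : size ws = n by rewrite size_mkseq.
set wt : n.-tuple Sout := @Tuple n Sout ws (introT eqP hws).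
have onth_ws : forall j, (j < n)%N -> onth ws j = Some (F j).
  by move=> j hj; rewrite (onth_lt (C root a0)) ?hws // nth_mkseq.
have onth_w : forall j, (j < n)%N -> onth w j = Some (nth (C root a0) w j).
  by move=> j hj; rewrite (onth_lt (C root a0)) ?hw.
have hB : forall j, (j < n)%N -> (d <= j)%N -> agree layer C ws (sp j).
  move=> j hj hdj; rewrite /agree hsp_layer // onth_ws // /F.
  by rewrite ltnNge hdj /=.
have hmono : forall e, e \in U -> agree layer C w e -> agree layer C ws e.
  move=> e he ha; case: (typeAB _ he) => [[l1 _] | [/andP[l1 l2] [s1 _]]]; last first.
    by rewrite s1; apply: hB.
  have hln : (layer e.1 < n)%N by exact: leq_trans l1 hdn.
  rewrite /agree onth_ws // /F l1 /=.
  have -> : [exists e0 in U, (layer e0.1 == layer e.1) && agree layer C w e0].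
    by apply/existsP; exists e; rewrite he eqxx ha.
  by move: ha; rewrite /agree onth_w.
have hpU : forall v e, v \in S -> e \in edges_from next root (p v) -> e \in U.
  by move=> v e hv he; apply/bigcupP; exists v => //; rewrite inE.
have hgood : forall v, v \in S -> Qc dl (dbits layer root next C ws (p v)) 0.
  move=> v hv; have hpv := hpU v _ hv; move: hpv; rewrite /p.
  case: (v =P xn) => [_ hpv|hne hpv].
    apply: (@Qc_mono _ _ _ (dbits layer root next C w (f vd) ++ nseq (n - d) false) _ 0).
    - by rewrite size_cat /dbits !size_map !size_edges size_nseq hsvd hssp subnKC.
    - move=> j; case: (ltnP j n) => hj; last first.
        by rewrite nth_default // /dbits size_map size_edges hssp.
      rewrite (nth_dbits _ _ _ _ _ a0) ?hssp // nth_cat /dbits size_map size_edges hsvd.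
      case: (ltnP j d) => hjd.
        rewrite -/(dbits layer root next C w (f vd)) (nth_dbits _ _ _ _ _ a0) ?hsvd //.
        have -> : (vtx root next (take j (f vd)), nth a0 (f vd) j) = sp j.
          by rewrite /sp /spine take_cat nth_cat hsvd hjd.
        by apply: contra; apply: hmono; apply: hspU.
      by rewrite -/(sp j) hB.
    - by [].
    apply/Q_cat; split.
      move=> i; rewrite size_nseq => hi.
      rewrite drop_nseq count_nseq mul0n subr_lt0 pmulr_rgt0 // ltr0n subn_gt0 //.
    apply: (@Qc_mono _ _ _ (dbits layer root next C w (f vd)) _ 0) => //.
    rewrite count_nseq mul0n subr0 add0r mulr_ge0 //; exact: ltW.
  move: hv => /setU1P [/hne []|hv].
  have [_ _ _ hg] := gv_spec v hv.
  apply: (@Qc_mono _ _ _ (dbits layer root next C w (f v)) _ 0) => //.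
  - by rewrite /dbits !size_map.
  - apply: dbits_mono => e he; apply: hmono; exact: hpv.
have hlast : forall v, v \in S ->
    exists e, [/\ e \in U, agree layer C ws e & next e.1 e.2 = v].
  move=> v hv; have [hs /andP [h0 _] hvv] := hpath v hv.
  move: (hpU v) (hgood v hv) hs hvv; case/lastP: (p v) => [|q a] hU hg hs hvv.
    by rewrite -hs in h0.
  exists (vtx root next q, a); split.
  - by apply: hU => //; rewrite edges_rcons mem_rcons mem_head.
  - rewrite dbits_rcons in hg; have := Qc_last hdl1 hg.
    by case: (agree _ _ _ _).
  - by rewrite -vtx_rcons.
have hnext : forall e, e \in U -> layer (next e.1 e.2) = (layer e.1).+1.
  by move=> e he; case: (typeAB e he) => [[_ [-> _]]|[_ [_ ->]]].
have hcover : forall j, (j < n)%N ->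
    exists e, [/\ e \in U, agree layer C ws e & layer (next e.1 e.2) = j.+1].
  move=> j hj; case ha: (agree layer C ws (sp j)).
    by exists (sp j); rewrite hnext ?hspU // hsp_layer.
  move: ha; rewrite /agree hsp_layer // onth_ws // /F.
  case: ifP => [/andP [_ /existsP [e /andP [heU /andP [/eqP hle hae]]]] _ | _]; last by rewrite eqxx.
  exists e; rewrite hnext // hle; split => //.
  by rewrite -hle; apply: hmono.
have hgoodS : forall v, v \in S ->
    dsfx R (codeword root next C (p v)) (take (size (p v)) wt) < 1 - eps.
  move=> v hv; have [hs /andP [_ hn'] _] := hpath v hv.
  by apply/(good_iff C Hlg hws) => //; [rewrite hs | apply: hgood].
have hpt : is_prefix_tree root next C eps wt S p.
  split.
  - apply/subsetP => v hv; rewrite inE; apply/existsP.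
    have [hs /andP [h0 hn'] hvv] := hpath v hv.
    exists (inord (layer v)); rewrite inordK ?ltnS // h0 /= inE; apply/existsP.
    exists (@Tuple (layer v) _ (p v) (introT eqP hs)); rewrite /= hvv eqxx /=.
    by rewrite -{1}hs; apply: hgoodS.
  - move=> v hv; have [hs /andP [h0 hn'] hvv] := hpath v hv.
    by split => //; [rewrite hs | apply: hgoodS].
  - by move=> e1 e2 h1 h2 hn; apply: hinj.
have hagr := Hsens wt S p hpt.
set A := [set e in U | agree layer C ws e].
have hA : agr layer C wt U = #|A| by [].
set X := [set next e.1 e.2 | e in A].
have hXA : #|X| = #|A|.
  apply: card_in_imset => e1 e2; rewrite !inE => /andP [h1 _] /andP [h2 _].
  exact: hinj.
have hlay : forall x, (layer x <= n)%N by case: Hlg.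
have hpart : #|X| = (\sum_(j < n.+1) #|[set x in X | layer x == j]|)%N.
  rewrite -sum1_card (partition_big (fun x => inord (layer x) : 'I_n.+1) (fun _ => true)) //=.
  apply: eq_bigr => j _; rewrite -sum1_card; apply: eq_bigl => x.
  rewrite !inE; congr (_ && _).
  apply/eqP/eqP => [<-|h]; first by rewrite inordK ?ltnS.
  by apply: val_inj; rewrite /= inordK ?ltnS.
have hXS : forall v, v \in S -> v \in X.
  move=> v hv; have [e [heU hae hev]] := hlast v hv.
  by apply/imsetP; exists e; rewrite ?inE ?heU ?hae.
have hlow : (\sum_(j < n.+1) ((0 < j)%N + (j \in Gs))%N <=
             \sum_(j < n.+1) #|[set x in X | layer x == j]|)%N.
  apply: leq_sum => j _.
  case hj0: (0 < j)%N; last by rewrite inE hj0.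
  case hjG: (j \in Gs).
    move: hjG; rewrite inE hj0 /= => hLj.
    apply: leq_trans hLj (subset_leq_card _); apply/subsetP => v hv.
    rewrite inE; apply/andP; split.
      apply: hXS; apply/setU1P; right; rewrite inE; apply/existsP; exists j.
      by rewrite hj0.
    move: hv; rewrite /L inE => /existsP [q /andP [/eqP <- _]].
    by rewrite (layer_vtx Hlg) size_tuple // -ltnS ltn_ord.
  rewrite addn0; apply/card_gt0P.
  have hjn : (j.-1 < n)%N by rewrite prednK // -ltnS ltn_ord.
  have [e [heU hae hl]] := hcover _ hjn.
  exists (next e.1 e.2); rewrite prednK // in hl; rewrite inE hl eqxx andbT.
  by apply/imsetP; exists e; rewrite ?inE ?heU ?hae.
have hsum : (\sum_(j < n.+1) ((0 < j)%N + (j \in Gs))%N = n + #|Gs|)%N.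
  by rewrite big_split /= sum_pos sum_ind.
have hfin : (n + #|Gs| <= #|A|)%N by rewrite -hsum -hXA hpart.
rewrite -(ler_nat R) natrD in hfin.
move: hagr; rewrite -/U -/A => h2; lra.
Qed.
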